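(* Let $\mathbb{F}_q$ be a finite field, $n\ge 1$, and let $C\le \mathbb{F}_q^n$ be a linear code which is an abelian group code. Let $G$ be a regular subgroup of the symmetric group $S_n$ such that $\langle G, C_{S_n}(G)\rangle \le \mathrm{PAut}(C)$, and such that $C$ is permutation equivalent to some ideal $I$ of the group algebra $\mathbb{F}_q[G]$ on which the derived subgroup $G'$ acts trivially from the left (respectively, on which $G'$ acts trivially from the right). If $G'\neq\{1\}$, then $C$ is a $|G'|$-divisible code and $|G'|$ divides $w(C)$.
   Context: All groups are finite. $\mathcal{B}=\{e_1,\dots,e_n\}$ is the standard basis of $\mathbb{F}_q^n$. A permutation $\sigma\in S_n$ acts on $\mathbb{F}_q^n$ by $\sigma(\sum a_ie_i)=\sum a_i e_{\sigma(i)}$, and $\mathrm{PAut}(C)=\{\sigma\in S_n:\sigma(C)=C\}$. A subgroup of $S_n$ is regular if it has order $n$ and acts transitively on $\{1,\dots,n\}$. $C_{S_n}(G)$ is the centralizer of $G$ in $S_n$. For a group $H$ of order $n$, a linear code $C\le\mathbb{F}_q^n$ is an $H$-code if there is a bijection $\phi:\mathcal{B}\to H$ whose $\mathbb{F}_q$-linear extension $\tilde\phi:\mathbb{F}_q^n\to\mathbb{F}_q[H]$ maps $C$ onto a two-sided ideal of $\mathbb{F}_q[H]$; $C$ is an abelian group code if it is an $H$-code for some abelian group $H$. $C$ is permutation equivalent to an ideal $I$ of $\mathbb{F}_q[G]$ if there is a bijection $\phi:\mathcal{B}\to G$ with $\tilde\phi(C)=I$. A subgroup $U\le G$ acts trivially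 from the left (right) on $X\subseteq\mathbb{F}_q[G]$ if $ux=x$ (resp. $xu=x$) for all $u\in U$, $x\in X$. For $c\in\mathbb{F}_q^n$, $w_H(c)$ is the number of nonzero coordinates of $c$; for an integer $\Delta>1$, $C$ is $\Delta$-divisible if $\Delta\mid w_H(c)$ for all $c\in C$; $w(C)=\min\{w_H(c):0\ne c\in C\}$. *)

(* Defs.v *)
From HB Require Import structures.
From mathcomp Require Import all_boot all_order all_algebra all_fingroup all_solvable all_field.
Set Implicit Arguments. Unset Strict Implicit. Unset Printing Implicit Defensive.
Import GRing.Theory.
Local Open Scope ring_scope.

Section Codes.
Variables (F : finFieldType) (n : nat).

Definition wH (c : 'rV[F]_n) : nat := #|[set i : 'I_n | c 0 i != 0]|.

Definition divisible_code (D : nat) (C : {vspace 'rV[F]_n}) : Prop :=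
  (1 < D)%N /\ forall c, c \in C -> (D %| wH c)%N.

(* minimum weight; convention: 0 for the zero code *)
Definition minw (C : {vspace 'rV[F]_n}) : nat :=
  if [pick c | (c \in C) && (c != 0)] is Some c0 then
    wH [arg min_(c < c0 | (c \in C) && (c != 0)) wH c]
  else 0%N.

(* action of sigma : sigma (sum a_i e_i) = sum a_i e_{sigma i} *)
Definition permv (s : {perm 'I_n}) (c : 'rV[F]_n) : 'rV[F]_n :=
  \row_j c 0 ((s^-1)%g j).

Definition PAut (C : {vspace 'rV[F]_n}) : {set {perm 'I_n}} :=
  [set s : {perm 'I_n} | [forall d : 'rV[F]_n,
      (d \in C) == [exists c : 'rV[F]_n, (c \in C) && (permv s c == d)]]].

(* group algebra F[H], elements as finitely supported functions gT -> F
   with support in H *)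
Variable gT : finGroupType.

Definition in_galg (H : {group gT}) (a : {ffun gT -> F}) : Prop :=
  forall x, x \notin H -> a x = 0.

Definition galg_mul (H : {group gT}) (a b : {ffun gT -> F}) : {ffun gT -> F} :=
  [ffun x => \sum_(y in H) a y * b ((y^-1)%g * x)%g].

Definition galg_elt (g : gT) : {ffun gT -> F} := [ffun x => (x == g)%:R].

Definition is_ideal (H : {group gT}) (I : {set {ffun gT -> F}}) : Prop :=
  [/\ forall x, x \in I -> in_galg H x,
      0 \in I,
      forall x y, x \in I -> y \in I -> x + y \in I,
      forall x, x \in I -> - x \in I &
      forall a x, in_galg H a -> x \in I ->
        galg_mul H a x \in I /\ galg_mul H x a \in I].

(* phi : B -> H is a bijection onto H (basis vector e_i identified with i) *)
Definition bij_onto (H : {group gT}) (phi : 'I_n -> gT) : Prop :=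
  injective phi /\ (forall x, x \in H <-> exists i, phi i = x).

Definition lin_ext (phi : 'I_n -> gT) (c : 'rV[F]_n) : {ffun gT -> F} :=
  [ffun x => \sum_(i | phi i == x) c 0 i].

Definition maps_onto (phi : 'I_n -> gT) (C : {vspace 'rV[F]_n})
    (I : {set {ffun gT -> F}}) : Prop :=
  forall x, x \in I <-> exists2 c, c \in C & lin_ext phi c = x.

Definition is_H_code (H : {group gT}) (C : {vspace 'rV[F]_n}) : Prop :=
  exists phi : 'I_n -> gT, bij_onto H phi /\
    exists I, is_ideal H I /\ maps_onto phi C I.

End Codes.

Definition abelian_group_code (F : finFieldType) (n : nat)
    (C : {vspace 'rV[F]_n}) : Prop :=
  exists (gT : finGroupType) (H : {group gT}),
    abelian H /\ #|H| = n /\ is_H_code H C.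

Definition regular (n : nat) (G : {group {perm 'I_n}}) : Prop :=
  #|G| = n /\ [transitive G, on [set: 'I_n] | 'P].

(* Main.v *)
Require Import Defs.
From HB Require Import structures.
From mathcomp Require Import all_boot all_order all_algebra all_fingroup all_solvable all_field.
Import GRing.Theory.
Local Open Scope ring_scope.
Local Open Scope group_scope.

Lemma rcosets_partition_mulA (gT : finGroupType) (H : {group gT}) (G : {set gT}) :
  partition (rcosets H G) (H * G).
Proof.
set HG := H * G; have sGHG: {subset G <= HG} by apply/subsetP/mulG_subr.
have defHx x: x \in HG -> [set y in HG | rcoset H x == rcoset H y] = H :* x.
  move=> HGx; apply/setP=> y; rewrite inE !rcosetE (sameP eqP rcoset_eqP).
  by rewrite rcoset_sym; apply/andb_idl/subsetP; rewrite mulGS sub1set.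
have:= preim_partitionP (rcoset H) HG; congr (partition _ _); apply/setP=> Hx.
apply/imsetP/idP=> [[x HGx ->] | ]; first by rewrite defHx // mem_rcosets.
by case/rcosetsP=> x /sGHG-HGx ->; exists x; rewrite ?defHx.
Qed.

Lemma card_stableL (gT : finGroupType) (K : {group gT}) (S : {set gT}) :
  K * S \subset S -> (#|K| %| #|S|)%N.
Proof.
move=> sub.
have eq : K * S = S by apply/eqP; rewrite eqEsubset sub mulG_subr.
rewrite -eq (@card_uniform_partition _ #|K| _ _ _ ((@rcosets_partition_mulA _ K S))) ?dvdn_mull //.
by move=> _ /rcosetsP[x Hx ->]; rewrite card_rcoset.
Qed.

Lemma card_stableR (gT : finGroupType) (K : {group gT}) (S : {set gT}) :
  S * K \subset S -> (#|K| %| #|S|)%N.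
Proof.
move=> sub; rewrite -(card_invg S); apply: (@card_stableL _ K).
by rewrite -[K : {set gT}]invGid -invMg invSg.
Qed.

Lemma lin_ext_phi (F : finFieldType) (n : nat) (gT : finGroupType) (phi : 'I_n -> gT)
  (c : 'rV[F]_n) i : injective phi -> lin_ext phi c (phi i) = c 0 i.
Proof.
move=> inj; rewrite /lin_ext ffunE (big_pred1 i) // => j /=.
by apply/eqP/eqP => [/inj|->].
Qed.

Lemma wH_supp (F : finFieldType) (n : nat) (gT : finGroupType) (G : {group gT})
  (phi : 'I_n -> gT) (c : 'rV[F]_n) : bij_onto G phi ->
  wH c = #|[set z in G | lin_ext phi c z != 0%R]|.
Proof.
move=> [inj onto]; rewrite /wH -(card_imset _ inj); apply: eq_card => z.
      rewrite !inE; apply/imsetP/andP.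
  case=> i; rewrite inE => nz ->; split; first by apply/onto; exists i.
  by rewrite lin_ext_phi.
case=> /onto [i <-]; rewrite lin_ext_phi // => nz; by exists i; rewrite ?inE.
Qed.

Lemma galg_mul_eltL (F : finFieldType) (gT : finGroupType) (G : {group gT}) u x z :
  u \in G -> galg_mul G (galg_elt F u) x z = x (u^-1 * z).
Proof.
move=> uG; rewrite /galg_mul ffunE (bigD1 u) //= big1 ?addr0.
  by rewrite /galg_elt ffunE eqxx mul1r.
by move=> y /andP[_ ne]; rewrite /galg_elt ffunE (negbTE ne) mul0r.
Qed.

Lemma galg_mul_eltR (F : finFieldType) (gT : finGroupType) (G : {group gT}) u x s :
  s \in G -> galg_mul G x (galg_elt F u) (s * u) = x s.
Proof.
move=> sG; rewrite /galg_mul ffunE (bigD1 s) //= big1 ?addr0.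
  by rewrite /galg_elt ffunE mulgA mulVg mul1g eqxx mulr1.
move=> y /andP[_ ne]; rewrite /galg_elt ffunE.
case: eqP => [e|]; last by rewrite mulr0.
have /eqP : y^-1 * s = 1 by apply: (mulIg u); rewrite -mulgA e mul1g.
by rewrite -eq_mulVg1 => /eqP ys; rewrite ys eqxx in ne.
Qed.

Theorem theorem1 (F : finFieldType) (n : nat) (C : {vspace 'rV[F]_n})
    (G : {group {perm 'I_n}}) :
  (0 < n)%N ->
  abelian_group_code C ->
  regular G ->
  (G <*> 'C(G) \subset PAut C)%g ->
  (exists (phi : 'I_n -> {perm 'I_n}) (I : {set {ffun {perm 'I_n} -> F}}),
     [/\ bij_onto G phi, is_ideal G I, maps_onto phi C I &
       ((forall u x, u \in (G^`(1))%g -> x \in I -> galg_mul G (galg_elt F u) x = x)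
        \/
        (forall u x, u \in (G^`(1))%g -> x \in I -> galg_mul G x (galg_elt F u) = x))]) ->
  (G^`(1))%g != 1%g ->
  divisible_code #|(G^`(1))%g| C /\ (#|(G^`(1))%g| %| minw C)%N.
Proof.
move=> _ _ _ _ [phi [I [bij idl mo act]]] ntK.
have Kgt1 : (1 < #|G^`(1)|)%N by rewrite cardG_gt1.
have KG := der_sub 1 G.
have div : forall c, c \in C -> (#|G^`(1)| %| wH c)%N.
  move=> c cC; rewrite (@wH_supp _ _ _ G phi c bij).
  have xI : lin_ext phi c \in I by apply/mo; exists c.
  move: xI; set x := lin_ext phi c => xI.
  case: act => [L|R].
    apply: (@card_stableL _ (G^`(1))%G); apply/subsetP => _ /mulsgP[k s kK sS ->].
    rewrite inE in sS; case/andP: sS => sG nz.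
    have kG : k \in G := subsetP KG k kK.
    by rewrite inE groupM //= -(L k x kK xI) galg_mul_eltL // mulKg.
  apply: (@card_stableR _ (G^`(1))%G); apply/subsetP => _ /mulsgP[s k sS kK ->].
  rewrite inE in sS; case/andP: sS => sG nz.
  have kG : k \in G := subsetP KG k kK.
  by rewrite inE groupM //= -(R k x kK xI) galg_mul_eltR.
split; first by split.
rewrite /minw; case: pickP => [c0 /andP[c0C nz]|_]; last exact: dvdn0.
by case: arg_minnP => [|c /andP[cC _] _]; [rewrite c0C | apply: div].
Qed.
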